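(* Let $g:\mathds{R}^d\setminus\{0\}\to[0,\infty)$ be continuous and let $(\mu_n)\subset K^g(\mathds{R}^d,\mathcal{M}^+(\mathds{R}^d\setminus\{0\}))$ converge boundedly and pointwise to $\mu:\mathds{R}^d\to\mathcal{M}^+(\mathds{R}^d\setminus\{0\})$. Then $\mu\in K^g(\mathds{R}^d,\mathcal{M}^+(\mathds{R}^d\setminus\{0\}))$.
   Context: $\mathcal{M}^+(\mathds{R}^d\setminus\{0\})$: positive locally finite measures on $\mathds{R}^d\setminus\{0\}$ with the vague topology. $K^g$: measurable maps $\mu:\mathds{R}^d\to\mathcal{M}^+(\mathds{R}^d\setminus\{0\})$ with $\|\mu\|_g:=\sup_x\int g(y)\mu(x,dy)<\infty$ and $\lim_{R\to\infty}\sup_{x\in K}\mu(x,\{|y|>R\})=0$ for every compact $K\subset\mathds{R}^d$. Bounded pointwise convergence $\mu_n\to\mu$: $\sup_n\|\mu_n\|_g<\infty$, $\mu_n(x)\to\mu(x)$ vaguely for every $x$, and $\lim_{R\to\infty}\sup_n\sup_{x\in K}\mu_n(x,\{|y|>R\})=0$ for every compact $K$. *)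

(* Defs.v *)
From HB Require Import structures.
From mathcomp Require Import all_boot all_order all_algebra.
From mathcomp Require Import all_classical all_reals all_analysis.
Set Implicit Arguments. Unset Strict Implicit. Unset Printing Implicit Defensive.
Import Order.TTheory GRing.Theory Num.Theory.
Import numFieldNormedType.Exports.
Local Open Scope classical_set_scope.
Local Open Scope ring_scope.

(* R^d as row vectors (product = Euclidean topology). *)
Definition Rd (R : realType) (d : nat) := 'rV[R]_d.

Definition BRd (R : realType) (d : nat) := g_sigma_algebraType (@open (Rd R d)).

Definition eucl (R : realType) (d : nat) (y : Rd R d) : R :=
  Num.sqrt (\sum_(i < d) (y ord0 i) ^+ 2).

(* Positive measures on R^d \ {0}: represented as Borel measures on R^d
   not charging {0}. *)
Definition meas (R : realType) (d : nat) := {measure set (BRd R d) -> \bar R}.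

Definition Mplus (R : realType) (d : nat) (nu : meas R d) : Prop :=
  nu [set (0 : Rd R d)] = 0%E /\
  forall K : set (Rd R d), compact K -> ~ K 0 -> (nu K < +oo)%E.

Definition Cc0 (R : realType) (d : nat) (f : Rd R d -> R) : Prop :=
  continuous f /\
  exists K : set (Rd R d), [/\ compact K, ~ K 0 & forall y, ~ K y -> f y = 0].

Definition integ (R : realType) (d : nat) (nu : meas R d) (f : Rd R d -> R)
  : \bar R := (\int[nu]_(y in (~` [set (0%R : Rd R d)] : set (BRd R d))) (f y)%:E)%E.

Definition vague_cvg (R : realType) (d : nat) (nus : nat -> meas R d)
  (nu : meas R d) : Prop :=
  forall f, Cc0 f -> (fun n => integ (nus n) f) @ \oo --> integ nu f.

(* open sets of the vague topology on M^+(R^d\{0}) (the coarsest topology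
   making nu |-> int f dnu continuous for every f in C_c(R^d\{0})),
   given by their traces on M^+. *)
Definition vague_open (R : realType) (d : nat) (S : set (meas R d)) : Prop :=
  forall nu, S nu -> Mplus nu ->
  exists (k : nat) (fs : nat -> Rd R d -> R) (e : R),
    [/\ 0 < e, (forall i, (i < k)%N -> Cc0 (fs i)) &
      forall nu', Mplus nu' ->
        (forall i, (i < k)%N -> (`| integ nu' (fs i) - integ nu (fs i) | < e%:E)%E) ->
        S nu'].

Definition vague_measurable (R : realType) (d : nat) (mu : Rd R d -> meas R d)
  : Prop :=
  forall S : set (meas R d), <<s @vague_open R d >> S ->
    @measurable _ (BRd R d) (mu @^-1` S).

Definition gbounded (R : realType) (d : nat) (g : Rd R d -> R)
  (mu : Rd R d -> meas R d) (C : R) : Prop :=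
  forall x, (integ (mu x) g <= C%:E)%E.

Definition tight (R : realType) (d : nat) (mu : Rd R d -> meas R d) : Prop :=
  forall K : set (Rd R d), compact K ->
  forall e : R, 0 < e ->
    \forall r \near (pinfty_nbhs R), forall x, K x ->
      (mu x [set y | (r < eucl y)%R] <= e%:E)%E.

Definition Kg (R : realType) (d : nat) (g : Rd R d -> R)
  (mu : Rd R d -> meas R d) : Prop :=
  [/\ forall x, Mplus (mu x),
      vague_measurable mu,
      exists C : R, gbounded g mu C
    & tight mu].

Definition bp_cvg (R : realType) (d : nat) (g : Rd R d -> R)
  (mus : nat -> Rd R d -> meas R d) (mu : Rd R d -> meas R d) : Prop :=
  [/\ exists C : R, forall n, gbounded g (mus n) C,
      forall x, vague_cvg (fun n => mus n x) (mu x)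
    & forall K : set (Rd R d), compact K ->
      forall e : R, 0 < e ->
        \forall r \near (pinfty_nbhs R), forall n x, K x ->
          (mus n x [set y | (r < eucl y)%R] <= e%:E)%E].

(* Main.v *)
Require Import Defs.
From HB Require Import structures.
From mathcomp Require Import all_boot all_order all_algebra finmap.
From mathcomp Require Import all_classical all_reals all_analysis.
From mathcomp Require Import measurable_realfun.
From mathcomp Require Import ring lra.
Import Order.TTheory GRing.Theory Num.Theory.
Import numFieldNormedType.Exports.
Local Open Scope classical_set_scope.
Local Open Scope ring_scope.

Set Implicit Arguments. Unset Strict Implicit. Unset Printing Implicit Defensive.

Section A.
Variables (R : realType) (d : nat).
Local Notation V := (Rd R d).
Local Notation BV := (BRd R d).
Local Notation D0 := (~` [set (0 : V)]).

Lemma open_meas (A : set V) : open A -> @measurable _ BV A.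
Proof. by move=> oA; apply: sub_sigma_algebra. Qed.

Lemma closed_meas (A : set V) : closed A -> @measurable _ BV A.
Proof.
move=> cA; rewrite -(setCK A); apply: measurableC; apply: open_meas.
exact: closed_openC.
Qed.

Lemma D0_meas : @measurable _ BV D0.
Proof. by apply: measurableC; apply: closed_meas; apply: accessible_closed_set1; apply: hausdorff_accessible; exact: norm_hausdorff. Qed.

Lemma cont_meas (f : V -> R) (A : set BV) : continuous f -> measurable_fun A (f : BV -> R).
Proof.
move=> cf mA; apply: (measurability _ (measurable_realfun.RGenOpens.measurableE R)) => //.
move=> _ [_ [a [b ->] <-]]; apply: measurableI => //.
apply: open_meas; apply: (proj1 (continuousP f)) cf _ _.
exact: interval_open.
Qed.


Lemma Cc0_bounded (f : V -> R) : Cc0 f -> exists M, 0 <= M /\ forall y, `|f y| <= M.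
Proof.
move=> [cf [K [cK K0 fK]]].
have : compact (f @` K) by apply: continuous_compact => //; exact: continuous_subspaceT.
move=> /compact_bounded [M [Mreal HM]].
exists (Num.max (M + 1) 0); split; first by rewrite le_max lexx orbT.
move=> y; case: (pselect (K y)) => Ky.
- apply: (HM (Num.max (M+1) 0)); first by rewrite lt_max ltrDl ltr01.
  by exists y.
- by rewrite fK // normr0 le_max lexx orbT.
Qed.

Lemma Cc0_cont (f : V -> R) : Cc0 f -> continuous f.
Proof. by case. Qed.

Lemma Cc0_meas (f : V -> R) (A : set BV) : Cc0 f -> measurable_fun A (EFin \o (f : BV -> R)).
Proof.
move=> /Cc0_cont cf; apply/measurable_EFinP.
exact: cont_meas.
Qed.

Lemma compact_meas (K : set V) : compact K -> @measurable _ BV K.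
Proof.
move=> cK; apply: closed_meas; apply: compact_closed => //.
Qed.

Lemma Cc0_integrable (nu : meas R d) (f : V -> R) :
  Mplus nu -> Cc0 f -> nu.-integrable (D0 : set BV) (EFin \o (f : BV -> R)).
Proof.
move=> [nu0 nuK] cf; have [M [M0 HM]] := Cc0_bounded cf.
move: (cf) => [_ [K [cK K0 fK]]].
have mK := compact_meas cK.
apply/integrableP; split; first exact: Cc0_meas.
apply: (@le_lt_trans _ _ (\int[nu]_(y in (D0 : set BV)) (M * \1_K y)%:E)%E).
  apply: ge0_le_integral => //.
  - exact: D0_meas.
  - apply: measurableT_comp => //; exact: Cc0_meas.
  - apply/measurable_realfun.measurable_EFinP; apply: measurable_funM => //.
  - move=> y _ /=; rewrite lee_fin; case: (pselect (K y)) => Ky.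
      by rewrite indicE mem_set // mulr1.
    by rewrite fK // normr0 indicE memNset // mulr0.
rewrite (@integralZl_indic _ _ _ _ _ D0_meas (fun _ => K)) //; last first.
  by move=> /lt_geF; rewrite M0.
rewrite integral_indic //; last exact: D0_meas.
apply: lte_mul_pinfty => //.
apply: (le_lt_trans _ (nuK K cK K0)).
by apply: le_measure; rewrite ?inE //; apply: measurableI => //; exact: D0_meas.
Qed.


Definition I (nu : meas R d) (f : V -> R) : R := fine (integ nu f).

Lemma integE nu f : Mplus nu -> Cc0 f -> integ nu f = (I nu f)%:E.
Proof.
move=> hn hf; rewrite /I fineK //.
exact: (integrable_fin_num D0_meas (Cc0_integrable hn hf)).
Qed.

Lemma Cc0_0 : Cc0 (fun _ : V => 0 : R).
Proof.
rewrite /Cc0; split; first exact: cst_continuous.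
by exists set0; split => //; exact: compact0.
Qed.

Lemma Cc0_sub f h : Cc0 f -> Cc0 h -> Cc0 (fun y : V => f y - h y).
Proof.
move=> [cf [K1 [cK1 K10 fK1]]] [ch [K2 [cK2 K20 hK2]]]; rewrite /Cc0; split.
  by move=> y; exact: (continuousB (cf y) (ch y)).
exists (K1 `|` K2); split; first exact: compactU.
  by case.
by move=> y /not_orP [/fK1 -> /hK2 ->]; rewrite subr0.
Qed.

Lemma Cc0_scale c f : Cc0 f -> Cc0 (fun y : V => c * f y).
Proof.
move=> [cf [K [cK K0 fK]]]; rewrite /Cc0; split.
  move=> y; have hc : {for y, continuous (fun _ : V => c)} by exact: cst_continuous.
  exact: (continuousM hc (cf y)).
by exists K; split => // y /fK ->; rewrite mulr0.
Qed.

Lemma Cc0_max f h : Cc0 f -> Cc0 h -> Cc0 (fun y : V => Num.max (f y) (h y)).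
Proof.
move=> [cf [K1 [cK1 K10 fK1]]] [ch [K2 [cK2 K20 hK2]]]; rewrite /Cc0; split.
  by move=> y; exact: (continuous_max (cf y) (ch y)).
exists (K1 `|` K2); split; first exact: compactU.
  by case.
by move=> y /not_orP [/fK1 -> /hK2 ->]; rewrite maxxx.
Qed.

Lemma I_sub nu f h : Mplus nu -> Cc0 f -> Cc0 h ->
  I nu (fun y => f y - h y) = I nu f - I nu h.
Proof.
move=> hn hf hh; apply: EFin_inj; rewrite EFinB -!integE //; last exact: Cc0_sub.
rewrite /integ -integralB_EFin //; first exact: D0_meas.
  exact: Cc0_integrable.
exact: Cc0_integrable.
Qed.

Lemma I_scale nu c h : Mplus nu -> Cc0 h ->
  I nu (fun y => c * h y) = c * I nu h.
Proof.
move=> hn hh; apply: EFin_inj; rewrite EFinM -!integE //; last exact: Cc0_scale.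
rewrite /integ -integralZl //; first exact: D0_meas.
exact: Cc0_integrable.
Qed.

Lemma I_absle nu f h : Mplus nu -> Cc0 f -> Cc0 h ->
  (forall y, `|f y| <= h y) -> `|I nu f| <= I nu h.
Proof.
move=> hn hf hh fh; rewrite -lee_fin -abse_EFin -!integE //.
rewrite /integ; apply: le_trans; first exact: (le_abse_integral nu D0_meas (@Cc0_meas f D0 hf)).
apply: ge0_le_integral => //.
- exact: D0_meas.
- apply: measurableT_comp => //; exact: Cc0_meas.
- exact: Cc0_meas.
- by move=> y _ /=; rewrite lee_fin.
Qed.

Lemma I_ge0 nu f : Mplus nu -> Cc0 f -> (forall y, 0 <= f y) -> 0 <= I nu f.
Proof.
move=> hn hf f0; rewrite -lee_fin -integE //.
by apply: integral_ge0 => y _; rewrite lee_fin.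
Qed.

Lemma I_le nu f h : Mplus nu -> Cc0 f -> Cc0 h -> (forall y, f y <= h y) ->
  I nu f <= I nu h.
Proof.
move=> hn hf hh fh; rewrite -subr_ge0 -I_sub //; apply: I_ge0 => //.
  exact: Cc0_sub.
by move=> y; rewrite subr_ge0.
Qed.


Definition clamp (t : R) : R := Num.min 1 (Num.max 0 t).

Lemma clamp_ge0 t : 0 <= clamp t.
Proof. by rewrite /clamp le_min ler01 le_max lexx. Qed.

Lemma clamp_le1 t : clamp t <= 1.
Proof. by rewrite /clamp ge_min lexx. Qed.

Lemma clamp0 t : t <= 0 -> clamp t = 0.
Proof. by move=> t0; rewrite /clamp (max_l t0) (min_r ler01). Qed.

Lemma clamp1 t : 1 <= t -> clamp t = 1.
Proof.
move=> t1; rewrite /clamp (max_r (le_trans ler01 t1)).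
exact: min_l.
Qed.

Lemma clamp_mono s t : s <= t -> clamp s <= clamp t.
Proof. by move=> st; rewrite /clamp le_min2 // le_max2. Qed.

Lemma clamp_cont : continuous clamp.
Proof.
move=> t; rewrite /clamp.
have h1 : {for t, continuous (fun _ : R => (1 : R))} by exact: cst_continuous.
have h0 : {for t, continuous (fun _ : R => (0 : R))} by exact: cst_continuous.
have hid : {for t, continuous (fun x : R => x)} by exact: cvg_id.
exact: (continuous_min h1 (continuous_max h0 hid)).
Qed.

Lemma normB_cont (c : V) : continuous (fun y : V => `|y - c|).
Proof.
move=> y; apply: (@continuous_comp _ _ _ (fun y : V => y - c) Num.norm).
  have hc : {for y, continuous (fun _ : V => c)} by exact: cst_continuous.
  exact: (continuousB (@cvg_id _ _) hc).
exact: norm_continuous.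
Qed.

Lemma cball_compact (c : V) (r : R) : compact [set y : V | `|y - c| <= r].
Proof.
apply: bounded_closed_compact.
  exists (`|c| + r); split; first exact: num_real.
  move=> M HM y /= Hy; apply: ltW; apply: le_lt_trans HM.
  rewrite -[y](subrK c); apply: le_trans; first exact: ler_normD.
  by rewrite addrC lerD2l.
have := proj1 (continuous_closedP _) (@normB_cont c) _ (@closed_le R r).
by [].
Qed.


Local Notation P := ('rV[rat]_d * rat * rat)%type.

Definition cvec (c : 'rV[rat]_d) : V := map_mx ratr c.

Definition cone (p : P) (y : V) : R :=
  ratr p.2 * clamp (2 - 2 * (`|y - cvec p.1.1| / ratr p.1.2)).

Definition valid (p : P) : bool :=
  [&& (0 < ratr p.1.2 :> R), (ratr p.1.2 < `|cvec p.1.1|) & (0 <= ratr p.2 :> R)].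

Lemma cone_ge0 p y : valid p -> 0 <= cone p y.
Proof. by case/and3P => _ _ q0; rewrite /cone mulr_ge0 // clamp_ge0. Qed.

Lemma cone_le p y : valid p -> cone p y <= ratr p.2.
Proof. by case/and3P => _ _ q0; rewrite /cone ler_piMr // clamp_le1. Qed.

Lemma cone_out p y : valid p -> ratr p.1.2 <= `|y - cvec p.1.1| -> cone p y = 0.
Proof.
case/and3P => r0 _ _ ry; rewrite /cone clamp0 ?mulr0 //.
have : 1 <= `|y - cvec p.1.1| / ratr p.1.2 by rewrite ler_pdivlMr // mul1r.
set X := _ / _; move=> hX; lra.
Qed.

Lemma cone_in p y : valid p -> `|y - cvec p.1.1| <= ratr p.1.2 / 2 -> cone p y = ratr p.2.
Proof.
case/and3P => r0 _ _ ry; rewrite /cone clamp1 ?mulr1 //.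
have : `|y - cvec p.1.1| / ratr p.1.2 <= 2^-1 by rewrite ler_pdivrMr // mulrC.
set X := _ / _; move=> hX; lra.
Qed.

Lemma cone_cont p : continuous (cone p).
Proof.
move=> y; rewrite /cone.
have hq : {for y, continuous (fun _ : V => (ratr p.2 : R))} by exact: cst_continuous.
apply: (continuousM hq).
apply: (@continuous_comp _ _ _ _ clamp); last exact: clamp_cont.
have h2 : {for y, continuous (fun _ : V => (2 : R))} by exact: cst_continuous.
apply: (continuousB h2); apply: (continuousM h2).
have hr : {for y, continuous (fun _ : V => (ratr p.1.2 : R)^-1)} by exact: cst_continuous.
exact: (continuousM (@normB_cont (cvec p.1.1) y) hr).
Qed.

Lemma cone_Cc0 p : valid p -> Cc0 (cone p).
Proof.
move=> vp; split; first exact: cone_cont.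
exists [set y | `|y - cvec p.1.1| <= ratr p.1.2]; split.
- exact: cball_compact.
- by case/and3P: vp => _ rc _; rewrite /= sub0r normrN; apply/negP; rewrite -ltNge.
- by move=> y /negP; rewrite -ltNge => /ltW; exact: cone_out.
Qed.

Definition maxc (L : seq P) (y : V) : R :=
  foldr (fun p acc => Num.max (cone p y) acc) 0 L.

Lemma maxc_Cc0 L : all valid L -> Cc0 (maxc L).
Proof.
elim: L => [_|p L IH /andP [vp vL]]; first exact: Cc0_0.
exact: (Cc0_max (cone_Cc0 vp) (IH vL)).
Qed.

Lemma maxc_ge0 L y : 0 <= maxc L y.
Proof. by elim: L => [|p L IH] //=; rewrite le_max IH orbT. Qed.

Lemma maxc_ge L p y : p \in L -> cone p y <= maxc L y.
Proof.
elim: L => [//|p' L IH]; rewrite inE => /orP [/eqP -> | pL] /=.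
  by rewrite le_max lexx.
by rewrite le_max (IH pL) orbT.
Qed.

Lemma maxc_le L y b : (forall p, p \in L -> cone p y <= b) -> 0 <= b -> maxc L y <= b.
Proof.
elim: L => [//|p L IH] H b0 /=; rewrite ge_max H ?mem_head //=.
by apply: IH => // p' p'L; apply: H; rewrite inE p'L orbT.
Qed.


Lemma rat_between (a b : R) : a < b -> exists q : rat, a < ratr q < b.
Proof.
move=> ab; have := @dense_rat R [set` `]a, b[].
case.
- exists ((a + b) / 2); rewrite /= in_itv /=; apply/andP; split; lra.
- exact: interval_open.
move=> x [/= xab [q _ qx]]; exists q; rewrite qx.
by move: xab; rewrite in_itv.
Qed.

Lemma vec_approx (z : V) (e : R) : 0 < e -> exists c, `|z - cvec c| < e.
Proof.
move=> e0.
have : forall i : 'I_d, exists q : rat, `|z ord0 i - ratr q| < e / 2.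
  move=> i; have /rat_between [q /andP[h1 h2]] : z ord0 i - e/2 < z ord0 i + e/2 by lra.
  by exists q; rewrite ltr_norml; apply/andP; split; lra.
case/choice => F HF; exists (\row_i F i).
have : ball z e (cvec (\row_i F i)).
  split => // i j; rewrite (ord1 i) /cvec !mxE.
  rewrite /ball /=; apply: lt_trans (HF j) _; lra.
by rewrite -ball_normE.
Qed.


Lemma cover_cones (K : set V) (Good : P -> Prop) : compact K -> ~ K 0 ->
  (forall z, K z -> exists2 e : R, 0 < e & forall c r, 0 < (ratr r : R) ->
      `|z - cvec c| < ratr r / 4 -> ratr r < e ->
      exists q, Good (c, r, q) /\ (0 <= ratr q :> R)) ->
  exists L : seq P, (forall p, p \in L -> valid p /\ Good p) /\
    (forall z, K z -> exists2 p, p \in L & `|z - cvec p.1.1| < ratr p.1.2 / 2).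
Proof.
move=> cK K0 HG; rewrite compact_cover in cK.
have := cK P [set p | valid p /\ Good p]
  (fun p => [set y | `|y - cvec p.1.1| < ratr p.1.2 / 2]).
case.
- move=> p _.
  have := proj1 (continuousP _) (@normB_cont (cvec p.1.1)) _ (@open_lt R (ratr p.1.2 / 2)).
  by [].
- move=> z Kz.
  have z0 : z != 0 by apply/eqP => z0; apply: K0; rewrite -z0.
  have [e e0 He] := HG z Kz.
  have e'0 : 0 < Num.min e (`|z| / 2) by rewrite lt_min e0 /= divr_gt0 // normr_gt0.
  have [r /andP [r0 re']] := rat_between e'0.
  have r40 : 0 < (ratr r : R) / 4 by rewrite divr_gt0.
  have [c zc] := vec_approx z r40.
  move: re'; rewrite lt_min => /andP [re rz].
  have [q [Gq q0]] := He c r r0 zc re.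
  exists (c, r, q); last by rewrite /=; lra.
  split => //; apply/and3P; split => //=.
  have : `|z| <= `|z - cvec c| + `|cvec c|.
    by rewrite -{1}[z](subrK (cvec c)) ler_normD.
  move=> h; lra.
move=> D' D'sub Kcov.
exists (enum_fset D'); split.
  by move=> p pD; have := D'sub p pD; rewrite inE.
move=> z Kz; have [p pD' zp] := Kcov z Kz.
by exists p.
Qed.


Lemma cover_h (K : set V) : compact K -> ~ K 0 ->
  exists L, all valid L /\ forall z, K z -> 1 <= maxc L z.
Proof.
move=> cK K0.
have [|L [HL Hcov]] := @cover_cones K (fun p => p.2 = 1%Q) cK K0.
  move=> z _; exists 1 => // c r _ _ _; exists 1%Q; split => //.
  by rewrite rmorph1.
exists L; split; first by apply/allP => p /HL [].
move=> z Kz; have [p pL zp] := Hcov z Kz.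
have [vp p1] := HL p pL.
apply: le_trans (maxc_ge z pL).
by rewrite cone_in // ?p1 ?rmorph1 //; exact: ltW.
Qed.

Lemma approx_pos (f : V -> R) (del : R) : Cc0 f -> (forall y, 0 <= f y) -> 0 < del ->
  exists L, all valid L /\ forall y, maxc L y <= f y /\ f y <= maxc L y + del.
Proof.
move=> cf f0 dp; move: (cf) => [fc [K [cK K0 fK]]].
pose Good (p : P) := (forall y, `|y - cvec p.1.1| < ratr p.1.2 -> ratr p.2 <= f y) /\
   (forall y, `|y - cvec p.1.1| < ratr p.1.2 / 2 -> f y <= ratr p.2 + del).
have [|L [HL Hcov]] := @cover_cones K Good cK K0.
  move=> z Kz.
  have h3 : 0 < del / 3 by rewrite divr_gt0.
  have := proj1 (@cvgrPdist_lt _ _ _ (nbhs z) _ f (f z)) (fc z) _ h3.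
  move=> H; have := proj1 (nbhs_normP _ _) (H (nbhs_filter z)). case=> e0 e0p He0.
  exists (e0 / 2); first by rewrite divr_gt0.
  move=> c r r0 zc re.
  have Hy : forall y, `|y - cvec c| < ratr r -> `|f z - f y| < del / 3.
    move=> y yc; apply: He0; rewrite /ball_ /=.
    have : `|z - y| <= `|z - cvec c| + `|y - cvec c|.
      have -> : z - y = (z - cvec c) - (y - cvec c) by rewrite opprB addrA subrK.
      exact: ler_normB.
    move=> h; lra.
  case: (lerP (f z) (del / 3)) => fz.
  - exists 0%Q; split; last by rewrite rmorph0.
    split => y yc /=; rewrite rmorph0 ?add0r; first exact: f0.
    have yc' : `|y - cvec c| < ratr r by lra.
    have /ltr_normlP [h1 h2] := Hy y yc'; lra.
  - have [q /andP [q1 q2]] : exists q : rat, Num.max 0 (f z - 2 * del / 3) < ratr q < f z - del / 3.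
      apply: rat_between; rewrite gt_max; apply/andP; split; lra.
    move: q1; rewrite gt_max => /andP [q0 q1].
    exists q; split; last exact: ltW.
    split => y yc /=.
      have /ltr_normlP [h1 h2] := Hy y yc; lra.
    have yc' : `|y - cvec c| < ratr r by lra.
    have /ltr_normlP [h1 h2] := Hy y yc'; lra.
exists L; split; first by apply/allP => p /HL [].
move=> y; split.
  apply: maxc_le => // p pL; have [vp [G1 _]] := HL p pL.
  case: (ltP (`|y - cvec p.1.1|) (ratr p.1.2)) => yp.
    by apply: le_trans (G1 y yp); exact: cone_le.
  by rewrite cone_out.
case: (pselect (K y)) => Ky.
  have [p pL yp] := Hcov y Ky; have [vp [_ G2]] := HL p pL.
  apply: le_trans (G2 y yp) _; rewrite lerD2r -(cone_in vp (ltW yp)).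
  exact: maxc_ge.
by rewrite fK // addr_ge0 // ?maxc_ge0 // ltW.
Qed.


Local Notation Cst := ((seq P * seq P) * rat * rat)%type.

Definition G (t : seq P * seq P) (y : V) : R := maxc t.1 y - maxc t.2 y.

Definition validc (cs : seq Cst) : bool :=
  all (fun t => all valid t.1.1.1 && all valid t.1.1.2) cs.

Definition Bset (cs : seq Cst) : set (meas R d) :=
  [set nu | Mplus nu /\ forall t, t \in cs -> `|I nu (G t.1.1) - ratr t.1.2| < ratr t.2].

Lemma G_Cc0 t : all valid t.1 -> all valid t.2 -> Cc0 (G t).
Proof. by move=> v1 v2; apply: Cc0_sub; exact: maxc_Cc0. Qed.

Lemma approx_signed (f : V -> R) (del : R) : Cc0 f -> 0 < del ->
  exists t, [/\ all valid t.1, all valid t.2,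
    (forall y, `|f y - G t y| <= del) & (forall y, f y = 0 -> G t y = 0)].
Proof.
move=> cf dp.
have cfp : Cc0 (fun y => Num.max (f y) 0) by apply: Cc0_max cf Cc0_0.
have cfm : Cc0 (fun y => Num.max (-1 * f y) 0) by apply: Cc0_max (Cc0_scale _ cf) Cc0_0.
have d2 : 0 < del / 2 by rewrite divr_gt0.
have [L1 [v1 H1]] := approx_pos cfp (fun y => ltac:(by rewrite le_max lexx orbT)) d2.
have [L2 [v2 H2]] := approx_pos cfm (fun y => ltac:(by rewrite le_max lexx orbT)) d2.
exists (L1, L2); split => // y; rewrite /G /=.
  have [h1 h1'] := H1 y; have [h2 h2'] := H2 y.
  have m1 := maxc_ge0 L1 y; have m2 := maxc_ge0 L2 y.
  case: (lerP 0 (f y)) => fy.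
    move: h1 h1' h2 h2'; rewrite (max_l fy) (max_r (_ : -1 * f y <= 0)); last by lra.
    by move=> *; rewrite ler_norml; apply/andP; split; lra.
  move: h1 h1' h2 h2'; rewrite (max_r (ltW fy)) (max_l (_ : 0 <= -1 * f y)); last by lra.
  by move=> *; rewrite ler_norml; apply/andP; split; lra.
move=> fy0.
have [h1 _] := H1 y; have [h2 _] := H2 y.
have m1 := maxc_ge0 L1 y; have m2 := maxc_ge0 L2 y.
move: h1 h2; rewrite fy0 mulr0 maxxx => h1 h2.
have -> : maxc L1 y = 0 by apply/eqP; rewrite eq_le h1 m1.
have -> : maxc L2 y = 0 by apply/eqP; rewrite eq_le h2 m2.
by rewrite subr0.
Qed.


Lemma approx_bound nu f t (h : V -> R) (del : R) : Mplus nu -> Cc0 f ->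
  all valid t.1 -> all valid t.2 -> Cc0 h -> 0 <= del ->
  (forall y, `|f y - G t y| <= del * h y) ->
  `|I nu f - I nu (G t)| <= del * I nu h.
Proof.
move=> hn cf v1 v2 ch d0 Hb.
have cg := G_Cc0 v1 v2.
rewrite -I_sub // -I_scale //.
apply: I_absle => //; [exact: Cc0_sub | exact: Cc0_scale].
Qed.

Lemma PF (nu : meas R d) (f : V -> R) (eps : R) : Mplus nu -> Cc0 f -> 0 < eps ->
  exists cs, [/\ validc cs, Bset cs nu &
    forall nu', Bset cs nu' -> `|I nu' f - I nu f| < eps].
Proof.
move=> hn cf e0; move: (cf) => [fc [K [cK K0 fK]]].
have [Lh [vLh Hh]] := cover_h cK K0.
have ch : Cc0 (maxc Lh) := maxc_Cc0 vLh.
set H := I nu (maxc Lh).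
have H0 : 0 <= H := I_ge0 hn ch (maxc_ge0 Lh).
set del := eps / (4 * (H + 2)).
have dp : 0 < del by rewrite divr_gt0 // mulr_gt0 //; lra.
have delE : del * (H + 2) = eps / 4.
  rewrite /del invfM mulrA -mulrA mulVf ?mulr1 //; lra.
have [t [v1 v2 Hfg Hz]] := approx_signed cf dp.
have cg := G_Cc0 v1 v2.
have Hb : forall y, `|f y - G t y| <= del * maxc Lh y.
  move=> y; case: (pselect (K y)) => Ky.
    apply: le_trans (Hfg y) _; rewrite -[X in X <= _]mulr1 ler_pM2l //.
    exact: Hh.
  by rewrite fK // (Hz y (fK y Ky)) subr0 normr0 mulr_ge0 // ?maxc_ge0 // ltW.
have m0 : 0 < Num.min 1 (eps / 8) by rewrite lt_min ltr01 divr_gt0.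
have [s /andP [s0 s1]] := rat_between m0.
move: s1; rewrite lt_min => /andP [s1 s2].
have [rh /andP [rh1 rh2]] : exists q : rat, H - ratr s < ratr q < H + ratr s.
  by apply: rat_between; lra.
have [rg /andP [rg1 rg2]] : exists q : rat,
    I nu (G t) - ratr s < ratr q < I nu (G t) + ratr s.
  by apply: rat_between; lra.
have GhE : G (Lh, [::]) = maxc Lh by apply/funext => y; rewrite /G /= subr0.
exists [:: ((Lh, [::]), rh, s); (t, rg, s)]; split.
- by rewrite /validc /= vLh v1 v2.
- split => // tt; rewrite !inE => /orP [/eqP -> | /eqP ->] /=.
    by rewrite GhE -/H ltr_norml; apply/andP; split; lra.
  by rewrite ltr_norml; apply/andP; split; lra.
move=> nu' [hn' Hc].
have := Hc _ (mem_head _ _); rewrite /= GhE => /ltr_normlP [c1 c2].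
have := Hc (t, rg, s); rewrite !inE eqxx orbT => /(_ isT) /= /ltr_normlP [c3 c4].
have b1 := approx_bound hn' cf v1 v2 ch (ltW dp) Hb.
have b2 := approx_bound hn cf v1 v2 ch (ltW dp) Hb.
move: b1 b2; rewrite !ler_norml -/H => /andP [b1 b1'] /andP [b2 b2'].
have e1 : del * I nu' (maxc Lh) <= del * (H + 2) by rewrite ler_pM2l //; lra.
have e2 : del * H <= del * (H + 2) by rewrite ler_pM2l //; lra.
rewrite ltr_norml; apply/andP; split; lra.
Qed.


Lemma basis (S : set (meas R d)) nu : vague_open S -> S nu -> Mplus nu ->
  exists cs, [/\ validc cs, Bset cs nu & Bset cs `<=` S].
Proof.
move=> oS Snu hn; have [k [fs [e [e0 Hfs HS]]]] := oS nu Snu hn.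
suff [cs [vc Bn Hcs]] : exists cs, [/\ validc cs, Bset cs nu &
   forall nu', Bset cs nu' -> forall i, (i < k)%N -> `|I nu' (fs i) - I nu (fs i)| < e].
  exists cs; split => // nu' Bnu'; have hn' := Bnu'.1.
  apply: HS => // i ik; have cfi := Hfs i ik.
  rewrite !integE // -EFinN -EFinD abse_EFin lte_fin.
  exact: Hcs.
elim: k Hfs {HS} => [|k IH] Hfs.
  by exists [::]; split => //; split.
have [cs [vc Bn Hcs]] := IH (fun i ik => Hfs i (leqW ik)).
have [cs' [vc' Bn' Hcs']] := PF hn (Hfs k (ltnSn k)) e0.
exists (cs ++ cs'); split.
- by rewrite /validc all_cat; apply/andP; split.
- split => // t; rewrite mem_cat => /orP [] ?; [exact: Bn.2 | exact: Bn'.2].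
- move=> nu' [hn' Hc] i; rewrite ltnS leq_eqVlt => /orP [/eqP -> | ik].
    by apply: Hcs'; split => // t tc; apply: Hc; rewrite mem_cat tc orbT.
  by apply: Hcs => //; split => // t tc; apply: Hc; rewrite mem_cat tc.
Qed.

Lemma vopen_I f a b : Cc0 f -> vague_open [set nu | Mplus nu /\ a < I nu f < b].
Proof.
move=> cf nu [hn /andP [ha hb]] _.
exists 1%N, (fun _ => f), (Num.min (I nu f - a) (b - I nu f)); split.
- by rewrite lt_min; apply/andP; split; lra.
- by [].
move=> nu' hn' /(_ 0%N isT); rewrite !integE // -EFinN -EFinD abse_EFin lte_fin.
rewrite lt_min => /andP [].
rewrite !ltr_norml => /andP [h1 h2] /andP [h3 h4].
by split => //; apply/andP; split; lra.
Qed.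

Lemma meas_itv_pre (F : BV -> R) (a b : R) : measurable_fun setT F ->
  @measurable _ BV [set x | a < F x < b].
Proof.
move=> mF.
have -> : [set x | a < F x < b] = setT `&` F @^-1` [set` `]a, b[].
  by rewrite setTI; apply/seteqP; split => x /=; rewrite in_itv.
exact: mF measurableT _ (measurable_itv _).
Qed.


Lemma meas_I_n (nu_ : V -> meas R d) f : (forall x, Mplus (nu_ x)) ->
  vague_measurable nu_ -> Cc0 f ->
  measurable_fun (setT : set BV) (fun x => I (nu_ x) f).
Proof.
move=> hM hv cf; apply: (measurability _ (measurable_realfun.RGenOpens.measurableE R)) => //.
move=> _ [_ [a [b ->] <-]].
have -> : setT `&` (fun x => I (nu_ x) f) @^-1` [set` `]a, b[] =
    nu_ @^-1` [set nu | Mplus nu /\ a < I nu f < b].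
  rewrite setTI; apply/seteqP; split => x /=; rewrite in_itv /=.
    by move=> h; split.
  by case.
by apply: hv; apply: sub_sigma_algebra; exact: vopen_I.
Qed.

Lemma meas_I_lim (mus : nat -> V -> meas R d) (mu : V -> meas R d) f :
  (forall n x, Mplus (mus n x)) -> (forall n, vague_measurable (mus n)) ->
  (forall x, Mplus (mu x)) -> (forall x, vague_cvg (fun n => mus n x) (mu x)) -> Cc0 f ->
  measurable_fun (setT : set BV) (fun x => I (mu x) f).
Proof.
move=> hMn hvn hM hc cf.
apply: (@measurable_fun_cvg _ BV _ setT (fun n (x : BV) => I (mus n x) f)).
  by move=> n; exact: meas_I_n.
move=> x _; have := hc x f cf; rewrite integE // => /fine_cvg.
by [].
Qed.

Lemma meas_Bset (mu : V -> meas R d) cs : (forall x, Mplus (mu x)) ->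
  (forall f, Cc0 f -> measurable_fun (setT : set BV) (fun x => I (mu x) f)) ->
  validc cs -> @measurable _ BV (mu @^-1` Bset cs).
Proof.
move=> hM HI; elim: cs => [_|t cs IH /andP [/andP [v1 v2] vc]].
  have -> : mu @^-1` Bset [::] = setT by apply/seteqP; split => x //= _; split.
  exact: measurableT.
have -> : mu @^-1` Bset (t :: cs) = [set x | ratr t.1.2 - ratr t.2 <
    I (mu x) (G t.1.1) < ratr t.1.2 + ratr t.2] `&` mu @^-1` Bset cs.
  apply/seteqP; split => x /=.
    move=> [hx Hx]; split.
      have := Hx t (mem_head _ _); rewrite ltr_norml => /andP [? ?].
      by apply/andP; split; lra.
    by split => // t' t'cs; apply: Hx; rewrite inE t'cs orbT.
  move=> [/andP [h1 h2] [hx Hx]]; split => // t'.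
  rewrite inE => /orP [/eqP -> | ]; last exact: Hx.
  by rewrite ltr_norml; apply/andP; split; lra.
apply: measurableI; last exact: IH.
by apply: meas_itv_pre; apply: HI; exact: G_Cc0.
Qed.

Lemma vmeas (mu : V -> meas R d) : (forall x, Mplus (mu x)) ->
  (forall f, Cc0 f -> measurable_fun (setT : set BV) (fun x => I (mu x) f)) ->
  vague_measurable mu.
Proof.
move=> hM HI S SS.
have sig := @sigma_algebra_image BV (meas R d) setT mu _ (@sigma_algebra_measurable _ BV).
suff : image_set_system setT mu (@measurable _ BV) S.
  rewrite /image_set_system /= => h.
  suff E : mu @^-1` S = [set: V] `&` mu @^-1` S by rewrite E; exact: h.
  by rewrite setTI.
apply: (smallest_sub sig) SS => {S} S oS.
rewrite /image_set_system /=.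
suff : @measurable _ BV (mu @^-1` S).
  by have -> : [set: V] `&` mu @^-1` S = mu @^-1` S by rewrite setTI.
pose F (i : nat) : set BV := match (choice.unpickle i : option (seq Cst)) with
  | Some cs => if pselect (validc cs /\ Bset cs `<=` S) is left _
               then mu @^-1` Bset cs else set0
  | None => set0 end.
have -> : mu @^-1` S = \bigcup_i F i.
  apply/seteqP; split => x /=.
    move=> Sx; have [cs [vc Bx BS]] := basis oS Sx (hM x).
    exists (choice.pickle cs) => //; rewrite /F choice.pickleK.
    by case: pselect => // -[]; split.
  move=> [i _]; rewrite /F; case: (choice.unpickle i) => [cs|//].
  by case: pselect => // -[_ BS] Bx; apply: BS.
apply: bigcupT_measurable => i; rewrite /F; case: (choice.unpickle i) => [cs|]; last exact: measurable0.
case: pselect => [[vc _]|_]; last exact: measurable0.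
exact: meas_Bset.
Qed.


Definition chi (phi : V -> R) (k : nat) (y : V) : R :=
  clamp (k.+1%:R * phi y - 1) * clamp (k.+1%:R - `|y|).

Lemma chi_ge0 phi k y : 0 <= chi phi k y.
Proof. by rewrite /chi mulr_ge0 // clamp_ge0. Qed.

Lemma chi_le1 phi k y : chi phi k y <= 1.
Proof.
rewrite /chi; apply: le_trans (ler_piMr (clamp_ge0 _) (clamp_le1 _)) _.
exact: clamp_le1.
Qed.

Lemma chi_zero phi k y : phi y <= 0 -> chi phi k y = 0.
Proof.
move=> p0; rewrite /chi clamp0 ?mul0r //.
have : k.+1%:R * phi y <= 0 by rewrite mulr_ge0_le0.
move=> h; lra.
Qed.

Lemma chi_mono phi y k k' : (k <= k')%N -> chi phi k y <= chi phi k' y.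
Proof.
move=> kk; case: (lerP (phi y) 0) => p0.
  by rewrite chi_zero // chi_ge0.
have kk' : (k.+1%:R : R) <= k'.+1%:R by rewrite ler_nat ltnS.
rewrite /chi; apply: ler_pM; rewrite ?clamp_ge0 //; apply: clamp_mono.
  by rewrite lerD2r ler_pM2r.
by rewrite lerD2r.
Qed.

Lemma chi_one phi y : 0 < phi y -> \forall k \near \oo, chi phi k y = 1.
Proof.
move=> p0; pose N := Num.trunc (2 / phi y + `|y| + 1).
near=> k.
have kN : (N <= k)%N by near: k; exists N.
have h1 : 2 / phi y + `|y| + 1 < k.+1%:R.
  apply: lt_le_trans (truncnS_gt _) _; rewrite ler_nat ltnS; exact: kN.
have h2 : 2 / phi y < k.+1%:R by have := normr_ge0 y; lra.
have h3 : 0 <= 2 / phi y by rewrite divr_ge0 // ltW.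
rewrite /chi clamp1 ?mul1r ?clamp1 //; first lra.
have : 2 < k.+1%:R * phi y by rewrite -ltr_pdivrMr.
lra.
Unshelve. all: by end_near.
Qed.

Lemma cont_sum n (F : 'I_n -> V -> R) : (forall i, continuous (F i)) ->
  continuous (fun y => \sum_(i < n) F i y).
Proof.
elim: n F => [|n IH] F HF.
  have -> : (fun y => \sum_(i < 0) F i y) = (fun _ => 0).
    by apply/funext => y; rewrite big_ord0.
  exact: cst_continuous.
have -> : (fun y => \sum_(i < n.+1) F i y) =
    (fun y => \sum_(i < n) F (widen_ord (leqnSn n) i) y + F ord_max y).
  by apply/funext => y; rewrite big_ord_recr.
move=> y; apply: continuousD; last exact: HF.
by apply: (IH (fun i => F (widen_ord (leqnSn n) i))) => i; exact: HF.
Qed.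

Lemma eucl_cont : continuous (@eucl R d).
Proof.
move=> y; rewrite /eucl.
apply: (@continuous_comp _ _ _ (fun y : V => \sum_(i < d) y ord0 i ^+ 2) Num.sqrt); last first.
  exact: sqrt_continuous.
apply: cont_sum => i.
have -> : (fun y : V => y ord0 i ^+ 2) = (fun y : V => y ord0 i * y ord0 i).
  by apply/funext => z; rewrite expr2.
move=> z; apply: continuousM; exact: coord_continuous.
Qed.

Lemma eucl0 : @eucl R d 0 = 0.
Proof. by rewrite /eucl big1 ?sqrtr0 // => i _; rewrite mxE expr0n. Qed.

Lemma chi_Cc0 (phi : V -> R) k : continuous phi -> phi 0 <= 0 -> Cc0 (chi phi k).
Proof.
move=> cphi p0; split.
  move=> y.
  have hc : {for y, continuous (fun _ : V => (k.+1%:R : R))} by exact: cst_continuous.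
  have h1 : {for y, continuous (fun _ : V => (1 : R))} by exact: cst_continuous.
  have c1 : {for y, continuous (fun y => clamp (k.+1%:R * phi y - 1))}.
    apply: (@continuous_comp _ _ _ (fun y => k.+1%:R * phi y - 1) clamp); last exact: clamp_cont.
    exact: (continuousB (continuousM hc (cphi y)) h1).
  have c2 : {for y, continuous (fun y : V => clamp (k.+1%:R - `|y|))}.
    apply: (@continuous_comp _ _ _ (fun y : V => k.+1%:R - `|y|) clamp); last exact: clamp_cont.
    exact: (continuousB hc (@norm_continuous _ V y)).
  exact: (continuousM c1 c2).
exists ([set y : V | `|y - 0| <= k.+1%:R] `&` [set y | k.+1%:R^-1 <= phi y]); split.
- apply: compact_closedI; first exact: cball_compact.
  have := proj1 (continuous_closedP _) cphi _ (@closed_ge R k.+1%:R^-1).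
  by [].
- by move=> [_ /=]; apply/negP; rewrite -ltNge; apply: le_lt_trans p0 _; rewrite invr_gt0.
move=> y /not_andP [] /negP; rewrite -ltNge => h.
  move: h; rewrite subr0 => h.
  by rewrite /chi (clamp0 (_ : k.+1%:R - `|y| <= 0)) ?mulr0 //; lra.
rewrite /chi clamp0 ?mul0r //.
have : k.+1%:R * phi y < k.+1%:R * k.+1%:R^-1 by rewrite ltr_pM2l.
rewrite mulfV // => h'.
lra.
Qed.


Lemma chi_small (phi : V -> R) k y : phi y < k.+1%:R^-1 -> chi phi k y = 0.
Proof.
move=> h; rewrite /chi clamp0 ?mul0r //.
have : k.+1%:R * phi y < k.+1%:R * k.+1%:R^-1 by rewrite ltr_pM2l.
rewrite mulfV // => h'; lra.
Qed.

Lemma lsc (nus : nat -> meas R d) (nu : meas R d) (h : nat -> V -> R)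
    (F : V -> \bar R) (B : \bar R) :
  (forall n, Mplus (nus n)) -> Mplus nu -> vague_cvg nus nu ->
  (forall k, Cc0 (h k)) -> (forall k y, 0 <= h k y) ->
  (forall y k k', (k <= k')%N -> h k y <= h k' y) ->
  (forall y, y != 0 -> (fun k => (h k y)%:E) @ \oo --> F y) ->
  (forall k n, integ (nus n) (h k) <= B)%E ->
  (\int[nu]_(y in (D0 : set BV)) F y <= B)%E.
Proof.
move=> hns hn hc ch h0 hmono hF hB.
have mc : (\int[nu]_(y in (D0 : set BV)) (h k y)%:E)%E @[k --> \oo] -->
    (\int[nu]_(y in (D0 : set BV)) limn (fun k => (h k y)%:E))%E.
  apply: cvg_monotone_convergence.
  - exact: D0_meas.
  - by move=> k; exact: Cc0_meas.
  - by move=> k y _; rewrite lee_fin.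
  - by move=> y _ k k' kk; rewrite lee_fin; exact: hmono.
have E : (\int[nu]_(y in (D0 : set BV)) F y =
          \int[nu]_(y in (D0 : set BV)) limn (fun k => (h k y)%:E))%E.
  apply: eq_integral => y; rewrite inE => y0; apply/esym/(cvg_lim (@ereal_hausdorff R)).
  by apply: hF; apply/eqP.
rewrite E -(cvg_lim (@ereal_hausdorff R) mc).
apply: lime_le; first by apply/cvg_ex; eexists; exact: mc.
apply: nearW => k.
have hk := hc (h k) (ch k).
rewrite /integ in hk.
rewrite -(cvg_lim (@ereal_hausdorff R) hk).
apply: lime_le; first by apply/cvg_ex; eexists; exact: hk.
by apply: nearW => n; exact: hB.
Qed.


Lemma gpart (g : V -> R) (nus : nat -> meas R d) nu C :
  {within D0, continuous g} -> (forall y, y != 0 -> 0 <= g y) ->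
  (forall n, Mplus (nus n)) -> Mplus nu -> vague_cvg nus nu ->
  (forall n, integ (nus n) g <= C%:E)%E -> (integ nu g <= C%:E)%E.
Proof.
move=> hgc hg0 hns hn hc hC.
pose phi := fun y : V => `|y|.
have cphi : continuous phi by move=> y; exact: norm_continuous.
have phi0 : phi 0 <= 0 by rewrite /phi normr0.
have gc : {in D0, continuous g}.
  by rewrite -(continuous_open_subspace g (closed_openC (accessible_closed_set1 (hausdorff_accessible (@norm_hausdorff R V)) (x := 0)))).
pose h k y := g y * chi phi k y.
have h00 k : h k 0 = 0 by rewrite /h chi_zero // mulr0.
have h0 k y : 0 <= h k y.
  case: (eqVneq y 0) => [->|y0]; first by rewrite h00.
  by rewrite /h mulr_ge0 ?chi_ge0 // hg0.
have ch k : Cc0 (h k).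
  have [_ [K [cK K0 chiK]]] := chi_Cc0 k cphi phi0.
  split; last by exists K; split => // y /chiK; rewrite /h => ->; rewrite mulr0.
  move=> y; case: (eqVneq y 0) => [->|y0].
    rewrite /continuous_at h00; apply: (@cvg_near_cst _ _ 0 (h k) (nbhs (0:V)) _).
    apply/nbhs_ballP; exists k.+1%:R^-1; first by rewrite /= invr_gt0.
    move=> z; rewrite -ball_normE /ball_ /= sub0r normrN => zk.
    by rewrite /h chi_small ?mulr0.
  have [_ [K' _]] := chi_Cc0 k cphi phi0.
  apply: (@continuousM _ _ g (chi phi k) y); first by apply: gc; rewrite inE; exact/eqP.
  by have [+ _] := chi_Cc0 k cphi phi0; apply.
have hmono y k k' : (k <= k')%N -> h k y <= h k' y.
  move=> kk; case: (eqVneq y 0) => [->|y0]; first by rewrite !h00.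
  by rewrite /h ler_wpM2l ?hg0 // chi_mono.
have hlim y : y != 0 -> h k y @[k --> \oo] --> g y.
  move=> y0; apply: cvg_near_cst.
  have p0 : 0 < phi y by rewrite /phi normr_gt0.
  by have := chi_one p0; apply: filterS => k hk; rewrite /h hk mulr1.
have mg : measurable_fun (D0 : set BV) (g : BV -> R).
  apply: (@measurable_fun_cvg _ BV _ D0 (fun k (y : BV) => h k y)).
    by move=> k; apply: cont_meas; exact: (ch k).1.
  move=> y y0; have y0' : y != 0 by apply/eqP. have := hlim y y0'. exact.
apply: (lsc hns hn hc ch h0 hmono (F := fun y => (g y)%:E)).
  by move=> y y0; apply: cvg_EFin; [exact: nearW | exact: hlim].
move=> k n; apply: le_trans (hC n); rewrite /integ.
apply: ge0_le_integral.
- exact: D0_meas.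
- by move=> y _; rewrite lee_fin.
- exact: Cc0_meas.
- by apply/measurable_EFinP.
- move=> y y0; rewrite lee_fin /h ler_piMr ?chi_le1 // hg0 //; exact/eqP.
Qed.


Lemma tpart (nus : nat -> meas R d) nu (r e : R) : 0 < r ->
  (forall n, Mplus (nus n)) -> Mplus nu -> vague_cvg nus nu ->
  (forall n, (nus n [set y | (r < eucl y)%R] <= e%:E)%E) ->
  (nu [set y | (r < eucl y)%R] <= e%:E)%E.
Proof.
move=> r0 hns hn hc hb.
pose phi := fun y : V => eucl y - r.
have cphi : continuous phi.
  move=> y; apply: continuousB; [exact: eucl_cont | exact: cst_continuous].
have phi0 : phi 0 <= 0 by rewrite /phi eucl0 sub0r oppr_le0 ltW.
pose W := [set y : V | r < eucl y].
have mW : @measurable _ BV W.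
  apply: open_meas.
  have := proj1 (continuousP _) eucl_cont _ (@open_gt R r).
  by [].
have WD : W `&` D0 = W.
  apply/seteqP; split => y; first by case.
  move=> Wy; split => // /= y0; move: Wy; rewrite /W /= y0 eucl0; lra.
have ch k : Cc0 (chi phi k) by exact: chi_Cc0.
have hlim y : (fun k => (chi phi k y)%:E) @ \oo --> (\1_W y)%:E.
  case: (pselect (W y)) => Wy.
    rewrite indicE mem_set //; apply: cvg_near_cst.
    have p0 : 0 < phi y by rewrite /phi subr_gt0.
    by have := chi_one p0; apply: filterS => k ->.
  rewrite indicE memNset //; apply: cvg_near_cst; apply: nearW => k.
  rewrite chi_zero //; rewrite /phi subr_le0; move: Wy; rewrite /W /=.
  by move/negP; rewrite -leNgt.
have := lsc hns hn hc ch (fun k y => chi_ge0 phi k y) (fun y k k' => @chi_mono phi y k k')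
  (F := fun y => (\1_W y)%:E) (B := e%:E) (fun y _ => hlim y).
rewrite integral_indic //; [|exact: D0_meas]; rewrite WD; apply.
move=> k n; apply: le_trans (hb n); rewrite /integ.
have E := integral_indic (nus n) D0_meas mW; rewrite WD in E.
rewrite -/W -E.
apply: ge0_le_integral.
- exact: D0_meas.
- by move=> y _; rewrite lee_fin chi_ge0.
- exact: Cc0_meas.
- by apply/measurable_EFinP; exact: measurable_indic.
- move=> y _; rewrite lee_fin indicE; case: (pselect (W y)) => Wy.
    by rewrite mem_set // chi_le1.
  rewrite memNset // chi_zero // /phi subr_le0; move: Wy; rewrite /W /=.
  by move/negP; rewrite -leNgt.
Qed.

End A.

Unset Implicit Arguments.

Theorem lemmaA4 (R : realType) (d : nat) (g : Rd R d -> R)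
  (hgc : {within ~` [set (0 : Rd R d)], continuous g})
  (hg0 : forall y : Rd R d, y != 0 -> 0 <= g y)
  (mus : nat -> Rd R d -> meas R d) (mu : Rd R d -> meas R d)
  (hmus : forall n, Kg g (mus n))
  (hmu : forall x, Mplus (mu x))
  (hcvg : bp_cvg g mus mu) :
  Kg g mu.
Proof.
have [[C HC] hcv htight] := hcvg.
have hMn : forall n x, Mplus (mus n x) by move=> n; have [] := hmus n.
have hvn : forall n, vague_measurable (mus n) by move=> n; have [] := hmus n.
split => //.
- apply: vmeas => // f cf; exact: (meas_I_lim hMn hvn hmu hcv cf).
- exists C => x; apply: (gpart hgc hg0 (fun n => hMn n x) (hmu x) (hcv x)).
  by move=> n; exact: HC.
- move=> K cK e e0.
  have H := htight K cK e e0.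
  have H2 : \forall r \near pinfty_nbhs R, 0 < r by exact: (nbhs_pinfty_gt (num_real (0:R))).
  move: H H2; apply: filterS2 => r Hr r0 x Kx.
  apply: (tpart r0 (fun n => hMn n x) (hmu x) (hcv x)).
  by move=> n; exact: Hr.
Qed.
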